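(* Let $\mathcal{C}$ be a monoidal category and $\mathcal{D}$ a non-strict monoidal category, let $F,G:\mathcal{C}\to\mathcal{D}$ be strong monoidal functors and let $\widehat{F},\widehat{G}:\mathcal{C}_q\to\mathcal{D}$ be the unique strict monoidal functors with $\widehat{F}\circ j=F$ and $\widehat{G}\circ j=G$. For every monoidal natural transformation $\alpha:F\Rightarrow G$ there exists a unique monoidal natural transformation $\widehat{\alpha}:\widehat{F}\Rightarrow\widehat{G}$ such that $\widehat{\alpha}\, j=\alpha$ (i.e. $\widehat{\alpha}_{((X),\bullet)}=\alpha_X$ for all $X$).
   Context: $\mathrm{Mag}(\bullet)$ is the free unital magma on one generator $\bullet$; $|t|$ is the number of bullets. Non-strictification $\mathcal{C}_q$ of $(\mathcal{C},\otimes,\mathbf{1},a,\ell,r)$: objects are pairs $(S,t)$, $S$ a finite sequence of objects of $\mathcal{C}$, $t\in\mathrm{Mag}(\bullet)$, $|t|=$ length of $S$. $\mathrm{Par}(\emptyset,\emptyset)=\mathbf{1}$, $\mathrm{Par}((X),\bullet)=X$, and for $|t|>1$, $t=t_1t_2$ uniquely with $|t_k|\ge1$, $S=S_1*S_2$ with $S_k$ of length $|t_k|$, $\mathrm{Par}(S,t)=\mathrm{Par}(S_1,t_1)\otimes\mathrm{Par}(S_2,t_2)$. $\mathrm{Hom}_{\mathcal{C}_q}((S,t),(S',t'))=\mathrm{Hom}_{\mathcal{C}}(\mathrm{Par}(S,t),\mathrm{Par}(S',t'))$. Monoidal structure: $(S,t)*(S',t')=(S*S',tt')$, unit $(\emptyset,\emptyset)$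 (strict), $f*g:=f\otimes g$ for nonempty factors, identity unit constraints, associativity constraint $a_q$ with $\mathrm{Par}(a_q)=a_{\mathrm{Par}(S,t),\mathrm{Par}(S',t'),\mathrm{Par}(S'',t'')}$. The embedding $j(X)=((X),\bullet)$ is strong monoidal with constraints corresponding to identities. A natural transformation $\alpha:F\Rightarrow G$ between monoidal functors $(F,\gamma,u)$, $(G,\gamma',u')$ is monoidal if $\alpha_{\mathbf{1}}\circ u=u'$ and $\alpha_{X\otimes Y}\circ\gamma_{X,Y}=\gamma'_{X,Y}\circ(\alpha_X\boxtimes\alpha_Y)$. *)

(* Defs.v *)
Set Implicit Arguments.
Unset Strict Implicit.

Record Category := {
  ob : Type;
  hom : ob -> ob -> Type;
  comp : forall a b c, hom b c -> hom a b -> hom a c;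
  idm : forall a, hom a a;
  comp_id_l : forall a b (f : hom a b), comp (idm b) f = f;
  comp_id_r : forall a b (f : hom a b), comp f (idm a) = f;
  comp_assoc : forall a b c d (f : hom c d) (g : hom b c) (h : hom a b),
      comp f (comp g h) = comp (comp f g) h }.
Arguments hom {_} _ _.
Arguments comp {_ _ _ _} _ _.
Arguments idm {_} _.
Notation "g ∘ f" := (comp g f) (at level 40, left associativity).

Definition id_of_eq (C : Category) (a b : ob C) (e : a = b) : hom a b :=
  match e in _ = y return hom a y with eq_refl => idm a end.

Record MonData (C : Category) := {
  tens : ob C -> ob C -> ob C;
  tensm : forall a b c d, hom a c -> hom b d -> hom (tens a b) (tens c d);
  munit : ob C;
  assoc : forall a b c, hom (tens (tens a b) c) (tens a (tens b c));
  assoc_inv : forall a b c, hom (tens a (tens b c)) (tens (tens a b) c);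
  lunit : forall a, hom (tens munit a) a;
  lunit_inv : forall a, hom a (tens munit a);
  runit : forall a, hom (tens a munit) a;
  runit_inv : forall a, hom a (tens a munit) }.
Arguments tensm {_} _ {_ _ _ _} _ _.

Record IsMonoidal (C : Category) (M : MonData C) : Prop := {
  tensm_id : forall a b, tensm M (idm a) (idm b) = idm (tens M a b);
  tensm_comp : forall a b c a' b' c' (f : hom a b) (g : hom b c)
      (f' : hom a' b') (g' : hom b' c'),
      tensm M (g ∘ f) (g' ∘ f') = tensm M g g' ∘ tensm M f f';
  assoc_nat : forall a b c a' b' c' (f : hom a a') (g : hom b b') (h : hom c c'),
      assoc M a' b' c' ∘ tensm M (tensm M f g) h
      = tensm M f (tensm M g h) ∘ assoc M a b c;
  lunit_nat : forall a b (f : hom a b),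
      lunit M b ∘ tensm M (idm (munit M)) f = f ∘ lunit M a;
  runit_nat : forall a b (f : hom a b),
      runit M b ∘ tensm M f (idm (munit M)) = f ∘ runit M a;
  assoc_iso1 : forall a b c, assoc_inv M a b c ∘ assoc M a b c = idm _;
  assoc_iso2 : forall a b c, assoc M a b c ∘ assoc_inv M a b c = idm _;
  lunit_iso1 : forall a, lunit_inv M a ∘ lunit M a = idm _;
  lunit_iso2 : forall a, lunit M a ∘ lunit_inv M a = idm _;
  runit_iso1 : forall a, runit_inv M a ∘ runit M a = idm _;
  runit_iso2 : forall a, runit M a ∘ runit_inv M a = idm _;
  pentagon : forall a b c d,
      assoc M a b (tens M c d) ∘ assoc M (tens M a b) c d
      = tensm M (idm a) (assoc M b c d) ∘ assoc M a (tens M b c) d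
        ∘ tensm M (assoc M a b c) (idm d);
  triangle : forall a b,
      tensm M (idm a) (lunit M b) ∘ assoc M a (munit M) b
      = tensm M (runit M a) (idm b) }.

Record MonCat := {
  mcat :> Category;
  mdata : MonData mcat;
  mlaws : IsMonoidal mdata }.

(* An object (S,t) with t in Mag(•) and |t| = length S is encoded as an element
   of the free unital magma on the objects of C: either the empty word (None)
   or a nonempty binary tree whose leaves, read left to right, form S. *)
Inductive ltree (T : Type) := Leaf (x : T) | Node (l r : ltree T).
Arguments Leaf {T} x.
Arguments Node {T} l r.

Definition qob (C : Category) := option (ltree (ob C)).

Fixpoint ParT (C : Category) (M : MonData C) (t : ltree (ob C)) : ob C :=
  match t with
  | Leaf x => x
  | Node l r => tens M (ParT M l) (ParT M r)
  end.

Definition Par (C : Category) (M : MonData C) (A : qob C) : ob C :=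
  match A with None => munit M | Some t => ParT M t end.

Definition qtens (T : Type) (A B : option (ltree T)) : option (ltree T) :=
  match A with
  | None => B
  | Some a => match B with None => Some a | Some b => Some (Node a b) end
  end.

Section Cq.
Variable C : MonCat.
Let M := mdata C.

Definition qphi (A B : qob C) : hom (tens M (Par M A) (Par M B)) (Par M (qtens A B)) :=
  match A as A0 return hom (tens M (Par M A0) (Par M B)) (Par M (qtens A0 B)) with
  | None => lunit M (Par M B)
  | Some a =>
    match B as B0 return hom (tens M (ParT M a) (Par M B0)) (Par M (qtens (Some a) B0)) with
    | None => runit M (ParT M a)
    | Some b => idm _
    end
  end.

Definition qphi_inv (A B : qob C) : hom (Par M (qtens A B)) (tens M (Par M A) (Par M B)) :=
  match A as A0 return hom (Par M (qtens A0 B)) (tens M (Par M A0) (Par M B)) with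
  | None => lunit_inv M (Par M B)
  | Some a =>
    match B as B0 return hom (Par M (qtens (Some a) B0)) (tens M (ParT M a) (Par M B0)) with
    | None => runit_inv M (ParT M a)
    | Some b => idm _
    end
  end.

Definition Cq : Category.
Proof.
  refine {| ob := qob C;
            hom := fun A B => @hom C (Par M A) (Par M B);
            comp := fun a b c g f => g ∘ f;
            idm := fun a => idm (Par M a) |}.
  - intros; apply comp_id_l.
  - intros; apply comp_id_r.
  - intros; apply comp_assoc.
Defined.

Definition qrunit (A : qob C) : @hom C (Par M (qtens A None)) (Par M A) :=
  match A as A0 return @hom C (Par M (qtens A0 None)) (Par M A0) with
  | None => idm _ | Some a => idm _ end.

Definition qrunit_inv (A : qob C) : @hom C (Par M A) (Par M (qtens A None)) :=
  match A as A0 return @hom C (Par M A0) (Par M (qtens A0 None)) with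
  | None => idm _ | Some a => idm _ end.

(* monoidal structure of C_q: f*g is f⊗g for nonempty factors (conjugated by
   the unit constraints of C otherwise), strict unit with identity unit
   constraints, and Par(a_q) = a_{Par A, Par B, Par C} for nonempty factors *)
Definition CqData : MonData Cq :=
  @Build_MonData Cq
     (@qtens (ob C))
     (fun A B A' B' (f : @hom C (Par M A) (Par M A'))
                             (g : @hom C (Par M B) (Par M B')) =>
        qphi A' B' ∘ tensm M f g ∘ qphi_inv A B)
     None
     (fun A B D =>
        qphi A (qtens B D) ∘ tensm M (idm (Par M A)) (qphi B D)
        ∘ assoc M (Par M A) (Par M B) (Par M D)
        ∘ tensm M (qphi_inv A B) (idm (Par M D)) ∘ qphi_inv (qtens A B) D)
     (fun A B D =>
        qphi (qtens A B) D ∘ tensm M (qphi A B) (idm (Par M D))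
        ∘ assoc_inv M (Par M A) (Par M B) (Par M D)
        ∘ tensm M (idm (Par M A)) (qphi_inv B D) ∘ qphi_inv A (qtens B D))
     (fun A => idm (Par M A))
     (fun A => idm (Par M A))
     qrunit
     qrunit_inv.

(* the embedding j : C -> C_q on objects; on morphisms j f = f *)
Definition jq (X : ob C) : ob Cq := Some (Leaf X).

End Cq.

Record Functor (C D : Category) := {
  fob : ob C -> ob D;
  fmap : forall a b, hom a b -> hom (fob a) (fob b);
  fmap_id : forall a, fmap (idm a) = idm (fob a);
  fmap_comp : forall a b c (g : hom b c) (f : hom a b),
      fmap (g ∘ f) = fmap g ∘ fmap f }.
Arguments fob {_ _} _ _.
Arguments fmap {_ _} _ {_ _} _.

Record MonFunctor (C : Category) (MC : MonData C) (D : Category) (MD : MonData D) := {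
  mfun :> Functor C D;
  mgam : forall a b, hom (tens MD (fob mfun a) (fob mfun b)) (fob mfun (tens MC a b));
  mu : hom (munit MD) (fob mfun (munit MC));
  mgam_nat : forall a b a' b' (f : hom a a') (g : hom b b'),
      fmap mfun (tensm MC f g) ∘ mgam a b = mgam a' b' ∘ tensm MD (fmap mfun f) (fmap mfun g);
  mf_assoc : forall a b c,
      fmap mfun (assoc MC a b c) ∘ mgam (tens MC a b) c ∘ tensm MD (mgam a b) (idm _)
      = mgam a (tens MC b c) ∘ tensm MD (idm _) (mgam b c)
        ∘ assoc MD (fob mfun a) (fob mfun b) (fob mfun c);
  mf_lunit : forall a,
      fmap mfun (lunit MC a) ∘ mgam (munit MC) a ∘ tensm MD mu (idm _)
      = lunit MD (fob mfun a);
  mf_runit : forall a,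
      fmap mfun (runit MC a) ∘ mgam a (munit MC) ∘ tensm MD (idm _) mu
      = runit MD (fob mfun a) }.
Arguments mgam {_ _ _ _} _ _ _.
Arguments mu {_ _ _ _} _.

Definition is_iso (C : Category) (a b : ob C) (f : hom a b) : Prop :=
  exists g : hom b a, g ∘ f = idm a /\ f ∘ g = idm b.

Definition strong C MC D MD (F : @MonFunctor C MC D MD) : Prop :=
  (forall a b, is_iso (mgam F a b)) /\ is_iso (mu F).

Definition strict C MC D MD (F : @MonFunctor C MC D MD) : Prop :=
  (forall a b, exists e : tens MD (fob F a) (fob F b) = fob F (tens MC a b),
      mgam F a b = id_of_eq e) /\
  (exists e : munit MD = fob F (munit MC), mu F = id_of_eq e).

Definition is_mon_nat C MC D MD (F G : @MonFunctor C MC D MD)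
    (al : forall X, hom (fob F X) (fob G X)) : Prop :=
  (forall X Y (f : hom X Y), al Y ∘ fmap F f = fmap G f ∘ al X) /\
  al (munit MC) ∘ mu F = mu G /\
  (forall X Y, al (tens MC X Y) ∘ mgam F X Y = mgam G X Y ∘ tensm MD (al X) (al Y)).

(* Fh ∘ j = F as monoidal functors, the equality of objects Fh (j X) = F X
   being witnessed by e (morphisms and constraints agree after transport).
   The constraints of j are identities, so those of Fh ∘ j are
   Fh(id) ∘ gamma^Fh_{jX,jY} and Fh(id) ∘ u^Fh. *)
Definition restricts (C D : MonCat) (Fh : MonFunctor (CqData C) (mdata D))
    (F : MonFunctor (mdata C) (mdata D)) (e : forall X, fob Fh (jq X) = fob F X) : Prop :=
  (forall (X Y : ob C) (f : hom X Y),
      fmap Fh (a := jq X) (b := jq Y) f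
      = id_of_eq (eq_sym (e Y)) ∘ fmap F f ∘ id_of_eq (e X)) /\
  (forall X Y : ob C,
      fmap Fh (a := qtens (jq X) (jq Y)) (b := jq (tens (mdata C) X Y))
           (idm (tens (mdata C) X Y)) ∘ mgam Fh (jq X) (jq Y)
      = id_of_eq (eq_sym (e (tens (mdata C) X Y))) ∘ mgam F X Y
        ∘ tensm (mdata D) (id_of_eq (e X)) (id_of_eq (e Y))) /\
  (fmap Fh (a := None) (b := jq (munit (mdata C))) (idm (munit (mdata C))) ∘ mu Fh
      = id_of_eq (eq_sym (e (munit (mdata C)))) ∘ mu F).
Arguments restricts {C D} Fh F e.
Arguments is_mon_nat {C MC D MD} F G al.
Arguments strong {C MC D MD} F.
Arguments strict {C MC D MD} F.
Arguments jq {C} X.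

(* Main.v *)
Require Import Defs.
Set Implicit Arguments.
Unset Strict Implicit.

Lemma rw2 (K : Category) (b c d : ob K) (g : hom c d) (f : hom b c) (h : hom b d)
  (E : g ∘ f = h) e (x : hom d e) : x ∘ g ∘ f = x ∘ h.
Proof. rewrite <- comp_assoc, E; reflexivity. Qed.

Lemma rw3 (K : Category) (a0 b c d : ob K) (g : hom c d) (f : hom b c) (k : hom a0 b) (h : hom a0 d)
  (E : g ∘ f ∘ k = h) e (x : hom d e) : x ∘ g ∘ f ∘ k = x ∘ h.
Proof. rewrite <- E, !comp_assoc; reflexivity. Qed.

Lemma rw2' (K : Category) (b c d c' : ob K) (g : hom c d) (f : hom b c) (h1 : hom c' d) (h2 : hom b c')
  (E : g ∘ f = h1 ∘ h2) e (x : hom d e) : x ∘ g ∘ f = x ∘ h1 ∘ h2.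
Proof. rewrite <- comp_assoc, E, comp_assoc; reflexivity. Qed.

Lemma ideq1 (K : Category) (a b : ob K) (e : a = b) : id_of_eq e ∘ id_of_eq (eq_sym e) = idm b.
Proof. destruct e; apply comp_id_l. Qed.
Lemma ideq2 (K : Category) (a b : ob K) (e : a = b) : id_of_eq (eq_sym e) ∘ id_of_eq e = idm a.
Proof. destruct e; apply comp_id_l. Qed.

Section S.
Variables (C D : MonCat).
Local Notation M := (mdata C).
Local Notation MD := (mdata D).

Section OneF.
Variable H : MonFunctor (CqData C) MD.

Lemma HcompC (A B E : qob C) (g : hom (Par M B) (Par M E)) (f : hom (Par M A) (Par M B)) :
  fmap H (a:=A) (b:=E) (g ∘ f) = fmap H (a:=B) (b:=E) g ∘ fmap H (a:=A) (b:=B) f.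
Proof. exact (fmap_comp H (a:=A) (b:=B) (c:=E) g f). Qed.

Lemma HidC (A : qob C) : fmap H (a:=A) (b:=A) (idm (Par M A)) = idm _.
Proof. exact (fmap_id H A). Qed.

Lemma Hinv (A B : qob C) (g : hom (Par M B) (Par M A)) (f : hom (Par M A) (Par M B)) :
  g ∘ f = idm _ -> fmap H (a:=B) (b:=A) g ∘ fmap H (a:=A) (b:=B) f = idm _.
Proof. intro E. rewrite <- HcompC, E. apply HidC. Qed.
Lemma Hext (A B : qob C) (f g : hom (Par M A) (Par M B)) :
  f = g -> fmap H (a:=A) (b:=B) f = fmap H (a:=A) (b:=B) g.
Proof. intros ->; reflexivity. Qed.
End OneF.

Section Main.
Variables (F G : MonFunctor M MD) (Fh Gh : MonFunctor (CqData C) MD)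
  (eF : forall X : ob C, fob Fh (jq X) = fob F X)
  (eG : forall X : ob C, fob Gh (jq X) = fob G X)
  (rF : restricts Fh F eF) (rG : restricts Gh G eG)
  (alpha : forall X : ob C, hom (fob F X) (fob G X))
  (Ha : is_mon_nat F G alpha).

Definition beta (X : ob C) : hom (fob Fh (jq X)) (fob Gh (jq X)) :=
  id_of_eq (eq_sym (eG X)) ∘ alpha X ∘ id_of_eq (eF X).

Definition ah (A : qob C) : hom (fob Fh A) (fob Gh A) :=
  fmap Gh (a:=jq (Par M A)) (b:=A) (idm (Par M A)) ∘ beta (Par M A)
  ∘ fmap Fh (a:=A) (b:=jq (Par M A)) (idm (Par M A)).

Lemma beta_nat X Y (f : hom X Y) :
  beta Y ∘ fmap Fh (a:=jq X) (b:=jq Y) f = fmap Gh (a:=jq X) (b:=jq Y) f ∘ beta X.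
Proof.
  destruct rF as [r1 _]. destruct rG as [g1 _]. destruct Ha as [n _].
  rewrite (r1 X Y f), (g1 X Y f). unfold beta. rewrite !comp_assoc.
  rewrite (rw2 (ideq1 (eF Y))), comp_id_r.
  rewrite (rw2 (ideq1 (eG X))), comp_id_r.
  rewrite (rw2 (n X Y f)), !comp_assoc. reflexivity.
Qed.

Lemma cd_id (H : MonFunctor (CqData C) MD) (A : qob C) :
  fmap H (a:=A) (b:=jq (Par M A)) (idm (Par M A)) ∘ fmap H (a:=jq (Par M A)) (b:=A) (idm (Par M A)) = idm _.
Proof. apply Hinv, comp_id_l. Qed.
Lemma dc_id (H : MonFunctor (CqData C) MD) (A : qob C) :
  fmap H (a:=jq (Par M A)) (b:=A) (idm (Par M A)) ∘ fmap H (a:=A) (b:=jq (Par M A)) (idm (Par M A)) = idm _.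
Proof. apply Hinv, comp_id_l. Qed.

Lemma ah_nat A B (f : hom (Par M A) (Par M B)) :
  ah B ∘ fmap Fh (a:=A) (b:=B) f = fmap Gh (a:=A) (b:=B) f ∘ ah A.
Proof.
  assert (EF : fmap Fh (a:=A) (b:=B) f = fmap Fh (a:=jq (Par M B)) (b:=B) (idm (Par M B))
     ∘ fmap Fh (a:=jq (Par M A)) (b:=jq (Par M B)) f ∘ fmap Fh (a:=A) (b:=jq (Par M A)) (idm (Par M A))).
  { rewrite <- !HcompC. f_equal. rewrite comp_id_l, comp_id_r. reflexivity. }
  assert (EG : fmap Gh (a:=A) (b:=B) f ∘ fmap Gh (a:=jq (Par M A)) (b:=A) (idm (Par M A)) =
     fmap Gh (a:=jq (Par M B)) (b:=B) (idm (Par M B)) ∘ fmap Gh (a:=jq (Par M A)) (b:=jq (Par M B)) f).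
  { rewrite <- !HcompC. f_equal. rewrite comp_id_l, comp_id_r. reflexivity. }
  unfold ah. rewrite EF, !comp_assoc.
  rewrite (rw2 (cd_id Fh B)), comp_id_r.
  rewrite (rw2 (beta_nat f)), !comp_assoc, EG. reflexivity.
Qed.

Lemma ah_unit : ah None ∘ mu Fh = mu Gh.
Proof.
  destruct rF as [_ [_ r3]]. destruct rG as [_ [_ g3]]. destruct Ha as [_ [hu _]].
  assert (R3 : fmap Fh (a:=None) (b:=jq (Par M None)) (idm (Par M None)) ∘ mu Fh
     = id_of_eq (eq_sym (eF (Par M None))) ∘ mu F) by exact r3.
  assert (G3 : fmap Gh (a:=None) (b:=jq (Par M None)) (idm (Par M None)) ∘ mu Gh
     = id_of_eq (eq_sym (eG (Par M None))) ∘ mu G) by exact g3.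
  assert (HU : alpha (Par M None) ∘ mu F = mu G) by exact hu.
  unfold ah, beta. rewrite (rw2 R3), !comp_assoc.
  rewrite (rw2 (ideq1 _)), comp_id_r, (rw2 HU).
  rewrite <- comp_assoc, <- G3, comp_assoc, dc_id, comp_id_l. reflexivity.
Qed.

Lemma qphi_iso (A B : qob C) : qphi A B ∘ qphi_inv A B = idm _.
Proof.
  destruct A as [a|]; [destruct B as [b|]|]; simpl.
  - apply comp_id_l.
  - apply (runit_iso2 (mlaws C)).
  - apply (lunit_iso2 (mlaws C)).
Qed.

Lemma tens_ideq (X1 X2 Y1 Y2 : ob D) (e1 : X1 = Y1) (e2 : X2 = Y2) :
  tensm MD (id_of_eq e1) (id_of_eq e2) ∘ tensm MD (id_of_eq (eq_sym e1)) (id_of_eq (eq_sym e2)) = idm _.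
Proof. rewrite <- (tensm_comp (mlaws D)), !ideq1. apply (tensm_id (mlaws D)). Qed.

Lemma ah_tens (A B : qob C) :
  ah (tens (CqData C) A B) ∘ mgam Fh A B = mgam Gh A B ∘ tensm MD (ah A) (ah B).
Proof.
  change (tens (CqData C) A B) with (qtens A B). unfold ah.
  set (P := Par M A). set (Q := Par M B). set (R := Par M (qtens A B)).
  set (PQ := tens M P Q).
  destruct rF as [_ [r2 _]]. destruct rG as [_ [g2 _]]. destruct Ha as [_ [_ ht]].
  assert (T1 : mgam Gh A B ∘ tensm MD (fmap Gh (a:=jq P) (b:=A) (idm P)) (fmap Gh (a:=jq Q) (b:=B) (idm Q))
      = fmap Gh (a:=qtens (jq P) (jq Q)) (b:=qtens A B) (qphi A B) ∘ mgam Gh (jq P) (jq Q)).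
  { rewrite <- (mgam_nat Gh (a:=jq P) (b:=jq Q) (a':=A) (b':=B) (idm P) (idm Q)).
    f_equal. apply Hext. change (qphi A B ∘ tensm M (idm P) (idm Q) ∘ idm PQ = qphi A B).
    rewrite comp_id_r, (tensm_id (mlaws C)). apply comp_id_r. }
  assert (T1F : fmap Fh (a:=qtens A B) (b:=qtens (jq P) (jq Q)) (qphi_inv A B) ∘ mgam Fh A B
      = mgam Fh (jq P) (jq Q) ∘ tensm MD (fmap Fh (a:=A) (b:=jq P) (idm P)) (fmap Fh (a:=B) (b:=jq Q) (idm Q))).
  { rewrite <- (mgam_nat Fh (a:=A) (b:=B) (a':=jq P) (b':=jq Q) (idm P) (idm Q)).
    f_equal. apply Hext. change (qphi_inv A B = idm PQ ∘ tensm M (idm P) (idm Q) ∘ qphi_inv A B).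
    rewrite (tensm_id (mlaws C)), !comp_id_l. reflexivity. }
  assert (R2G : fmap Gh (a:=qtens (jq P) (jq Q)) (b:=jq PQ) (idm PQ) ∘ mgam Gh (jq P) (jq Q)
      = id_of_eq (eq_sym (eG PQ)) ∘ mgam G P Q ∘ tensm MD (id_of_eq (eG P)) (id_of_eq (eG Q)))
    by exact (g2 P Q).
  assert (R2F : fmap Fh (a:=qtens (jq P) (jq Q)) (b:=jq PQ) (idm PQ) ∘ mgam Fh (jq P) (jq Q)
      = id_of_eq (eq_sym (eF PQ)) ∘ mgam F P Q ∘ tensm MD (id_of_eq (eF P)) (id_of_eq (eF Q)))
    by exact (r2 P Q).
  assert (LG : mgam Gh (jq P) (jq Q) ∘ tensm MD (id_of_eq (eq_sym (eG P))) (id_of_eq (eq_sym (eG Q)))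
      = fmap Gh (a:=jq PQ) (b:=qtens (jq P) (jq Q)) (idm PQ) ∘ id_of_eq (eq_sym (eG PQ)) ∘ mgam G P Q).
  { transitivity (fmap Gh (a:=jq PQ) (b:=qtens (jq P) (jq Q)) (idm PQ)
       ∘ (fmap Gh (a:=qtens (jq P) (jq Q)) (b:=jq PQ) (idm PQ) ∘ mgam Gh (jq P) (jq Q))
       ∘ tensm MD (id_of_eq (eq_sym (eG P))) (id_of_eq (eq_sym (eG Q)))).
    { rewrite comp_assoc, (Hinv Gh (A:=qtens (jq P) (jq Q)) (B:=jq PQ) (g:=idm PQ) (f:=idm PQ) (comp_id_l _)).
      rewrite comp_id_l. reflexivity. }
    rewrite R2G, !comp_assoc, (rw2 (tens_ideq _ _)), comp_id_r. reflexivity. }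
  assert (LF : id_of_eq (eF PQ) ∘ fmap Fh (a:=qtens (jq P) (jq Q)) (b:=jq PQ) (idm PQ) ∘ mgam Fh (jq P) (jq Q)
      = mgam F P Q ∘ tensm MD (id_of_eq (eF P)) (id_of_eq (eF Q))).
  { rewrite <- comp_assoc, R2F, !comp_assoc, ideq1, comp_id_l. reflexivity. }
  assert (HT : alpha PQ ∘ mgam F P Q = mgam G P Q ∘ tensm MD (alpha P) (alpha Q)) by exact (ht P Q).
  assert (EF : fmap Fh (a:=qtens (jq P) (jq Q)) (b:=jq PQ) (idm PQ)
                 ∘ fmap Fh (a:=qtens A B) (b:=qtens (jq P) (jq Q)) (qphi_inv A B)
             = fmap Fh (a:=jq R) (b:=jq PQ) (qphi_inv A B) ∘ fmap Fh (a:=qtens A B) (b:=jq R) (idm R)).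
  { rewrite <- !HcompC. f_equal. rewrite comp_id_l, comp_id_r. reflexivity. }
  assert (EG : fmap Gh (a:=qtens (jq P) (jq Q)) (b:=qtens A B) (qphi A B)
                 ∘ fmap Gh (a:=jq PQ) (b:=qtens (jq P) (jq Q)) (idm PQ)
             = fmap Gh (a:=jq R) (b:=qtens A B) (idm R) ∘ fmap Gh (a:=jq PQ) (b:=jq R) (qphi A B)).
  { rewrite <- !HcompC. f_equal. rewrite comp_id_l, comp_id_r. reflexivity. }
  assert (EB : forall X, id_of_eq (eq_sym (eG X)) ∘ alpha X ∘ id_of_eq (eF X) = beta X) by reflexivity.
  assert (II : fmap Fh (a:=jq PQ) (b:=jq R) (qphi A B) ∘ fmap Fh (a:=jq R) (b:=jq PQ) (qphi_inv A B) = idm _).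
  { apply Hinv, qphi_iso. }
  repeat change (tens (CqData C) ?x ?y) with (qtens x y) in *.
  rewrite !(tensm_comp (mlaws D)), !comp_assoc, T1.
  unfold beta at 2 3. rewrite !(tensm_comp (mlaws D)), !comp_assoc.
  rewrite (rw2 LG), !comp_assoc, (rw2 (eq_sym HT)), !comp_assoc.
  rewrite (rw2 (eq_sym LF)), !comp_assoc, (rw2 (eq_sym T1F)), !comp_assoc.
  rewrite (rw2' EF), EG.
  rewrite (rw3 (EB PQ)).
  rewrite (rw2' (eq_sym (beta_nat (qphi A B)))).
  rewrite (rw2 II), comp_id_r. reflexivity.
Qed.

End Main.
End S.

Theorem mainTheorem8 (C D : MonCat)
  (F G : MonFunctor (mdata C) (mdata D))
  (Fh Gh : MonFunctor (CqData C) (mdata D))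
  (eF : forall X : ob C, fob Fh (jq X) = fob F X)
  (eG : forall X : ob C, fob Gh (jq X) = fob G X) :
  strong F -> strong G -> strict Fh -> strict Gh ->
  restricts Fh F eF -> restricts Gh G eG ->
  forall alpha : forall X : ob C, hom (fob F X) (fob G X),
  is_mon_nat F G alpha ->
  exists ah : forall A : ob (Cq C), hom (fob Fh A) (fob Gh A),
    is_mon_nat Fh Gh ah /\
    (forall X : ob C, ah (jq X) = id_of_eq (eq_sym (eG X)) ∘ alpha X ∘ id_of_eq (eF X)) /\
    (forall bh : forall A : ob (Cq C), hom (fob Fh A) (fob Gh A),
       is_mon_nat Fh Gh bh ->
       (forall X : ob C, bh (jq X) = id_of_eq (eq_sym (eG X)) ∘ alpha X ∘ id_of_eq (eF X)) ->
       forall A, bh A = ah A).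
Proof.
  intros _ _ _ _ rF rG alpha Ha.
  exists (ah eF eG alpha).
  split; [split; [|split]|split].
  - intros X Y f. exact (ah_nat rF rG Ha f).
  - exact (ah_unit rF rG Ha).
  - intros X Y. exact (ah_tens rF rG Ha X Y).
  - intros X. unfold ah.
    assert (E1 : fmap Gh (a:=jq X) (b:=jq X) (idm X) = idm _) by exact (fmap_id Gh (jq X)).
    assert (E2 : fmap Fh (a:=jq X) (b:=jq X) (idm X) = idm _) by exact (fmap_id Fh (jq X)).
    change (Par (mdata C) (jq X)) with X.
    rewrite E1, E2, comp_id_l, comp_id_r. reflexivity.
  - intros bh [bn _] bl A.
    transitivity (fmap Gh (a:=jq (Par (mdata C) A)) (b:=A) (idm (Par (mdata C) A))
        ∘ bh (jq (Par (mdata C) A))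
        ∘ fmap Fh (a:=A) (b:=jq (Par (mdata C) A)) (idm (Par (mdata C) A))).
    + rewrite <- comp_assoc, (bn A (jq (Par (mdata C) A)) (idm (Par (mdata C) A))).
      rewrite comp_assoc, dc_id, comp_id_l. reflexivity.
    + unfold ah. rewrite bl. reflexivity.
Qed.
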